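(* Let $\mathbf{G}$ be a labeled multilayer directed network on $\mathcal{V}=\{v_1,\dots,v_n\}$ with labels $\{C_1,\dots,C_h\}$ and attractiveness values $A_{i,l}$ such that for each $l$ the values $A_{1,l},\dots,A_{n,l}$ are pairwise distinct, and suppose $\mathbf{G}$ is extremal, i.e. $P(\mathbf{G})=\min_{\mathbf{H}\in\mathcal{R}(\mathbf{G})}P(\mathbf{H})$ or $P(\mathbf{G})=\max_{\mathbf{H}\in\mathcal{R}(\mathbf{G})}P(\mathbf{H})$. Let $E\subseteq\mathcal{E}$ be a nonempty edge set with $\Delta(E)=0$. Then there is no label $C_l$ with $C_l\in\mathcal{C}(e)$ for all $e\in E$ (i.e. the edges of $E$ do not share a common label). Equivalently, if all edges of $E$ share a common label, then $\Delta(E)=1$.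
   Context: A labeled multilayer directed network $\mathbf{G}=(\mathcal{V},\mathcal{E})$ is a finite simple directed graph (no self-loops, no multiple edges) on nodes $\mathcal{V}=\{v_1,\dots,v_n\}$ in which each edge $v_i\to v_j\in\mathcal{E}$ carries a nonempty label set $\mathcal{C}(i,j)\subseteq\{C_1,\dots,C_h\}$; an ordered pair $(v_i,v_j)$ is an edge iff $\mathcal{C}(i,j)\neq\emptyset$. The $l$-th layer $\mathbf{G}_l=(\mathcal{V}_l,\mathcal{E}_l)$ consists of all edges with $C_l\in\mathcal{C}(i,j)$ and their endpoints. Each node $v_i$ has, for each $l$, an attractiveness $A_{i,l}\ge 0$; let $A_{\max,l}=\max_i A_{i,l}$. The potential energy of $v_i$ in layer $l$ is $P_l(i)=\sum_{j=1}^n (A_{\max,l}-A_{j,l})\,\chi(v_i\to v_j\in\mathcal{E}_l)$, and $P(\mathbf{G})=\sum_{i=1}^n\sum_{l=1}^h P_l(i)$. A rewiring move replaces, for some layer $l$ and some edge $v_j\to v_k\in\mathcal{E}_l$, the layer-$l$ edge $v_j\to v_k$ by a layer-$l$ edge $v_j\to v_w$ with $w\neq j$ and $v_j\to v_w\notin\mathcal{E}_l$ (i.e. $C_l$ is removed from $\mathcal{C}(j,k)$ and added to $\mathcal{C}(j,w)$; the edge $v_j\to v_k$ disappears if its label set becomes empty, and $v_j\to v_w$ is created if it did not exist). $\mathcal{R}(\mathbf{G})$ is the set of all labeled multilayer networks (same nodes, same attractiveness values) obtainable from $\mathbf{G}$ by finite sequences of rewiring moves (including $\mathbf{G}$). For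 an edge set $F$, $\lceil F\rceil_{src}$ (resp. $\lceil F\rceil_{tar}$) is the set of source (resp. target) nodes of edges of $F$. A node $u$ is a $(2,\mathbf{G})$-follower of $v$ if the directed shortest-path distance from $u$ to $v$ in $\mathbf{G}$ (ignoring labels) equals exactly $2$. The removal procedure on $E$: set $F:=E$; while there exists a node $v\in\lceil F\rceil_{tar}$ having no $(2,\mathbf{G})$-follower in $\lceil F\rceil_{src}$, choose one such $v$ and remove from $F$ all edges of $F$ whose target is $v$; when no such node exists (or $F=\emptyset$), stop and set $\delta(E):=F$ (this is independent of the choices made). $\Delta(E)=1$ if $\delta(E)=\emptyset$, and $\Delta(E)=0$ otherwise. *)

(* Defs.v *)
From mathcomp Require Import all_boot all_order all_algebra.
From Stdlib Require Import Relations.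
Set Implicit Arguments. Unset Strict Implicit. Unset Printing Implicit Defensive.
Import Order.TTheory GRing.Theory Num.Theory.
Local Open Scope ring_scope.

(* A labeled multilayer directed network on nodes 'I_n with labels 'I_h:
   G i j is the label set C(i,j); (i,j) is an edge iff G i j != set0. *)
Definition net (n h : nat) := 'I_n -> 'I_n -> {set 'I_h}.

Definition no_self_loops n h (G : net n h) : Prop := forall i, G i i = set0.

Definition is_edge n h (G : net n h) (i j : 'I_n) : bool := G i j != set0.

Definition edges n h (G : net n h) : {set 'I_n * 'I_n} :=
  [set e | is_edge G e.1 e.2].

Definition rewire_step n h (G G' : net n h) : Prop :=
  exists (l : 'I_h) (j k w : 'I_n),
    [/\ l \in G j k, w != j, l \notin G j w &
     forall x y, G' x y =
       if (x == j) && (y == k) then G j k :\ l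
       else if (x == j) && (y == w) then l |: G j w
       else G x y].

Definition reachable n h (G H : net n h) : Prop :=
  clos_refl_trans (net n h) (@rewire_step n h) G H.

Definition Amax (R : realDomainType) n h (A : 'I_n -> 'I_h -> R) (l : 'I_h) : R :=
  \big[Num.max/0]_(i : 'I_n) A i l.

Definition Pl (R : realDomainType) n h (A : 'I_n -> 'I_h -> R) (G : net n h)
  (l : 'I_h) (i : 'I_n) : R :=
  \sum_(j : 'I_n) (Amax A l - A j l) *+ (l \in G i j).

Definition Ptot (R : realDomainType) n h (A : 'I_n -> 'I_h -> R) (G : net n h) : R :=
  \sum_(i : 'I_n) \sum_(l : 'I_h) Pl A G l i.

Definition extremal (R : realDomainType) n h (A : 'I_n -> 'I_h -> R) (G : net n h) : Prop :=
  (forall H, reachable G H -> Ptot A G <= Ptot A H) \/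
  (forall H, reachable G H -> Ptot A H <= Ptot A G).

Fixpoint walk_len n h (G : net n h) (k : nat) (u v : 'I_n) : bool :=
  match k with
  | 0 => u == v
  | k'.+1 => [exists w, is_edge G u w && walk_len G k' w v]
  end.

Definition dist_eq2 n h (G : net n h) (u v : 'I_n) : bool :=
  [&& walk_len G 2 u v, ~~ walk_len G 1 u v & ~~ walk_len G 0 u v].

Definition follower2 n h (G : net n h) (u v : 'I_n) : bool := dist_eq2 G u v.

Definition src n (F : {set 'I_n * 'I_n}) : {set 'I_n} := [set e.1 | e in F].
Definition tar n (F : {set 'I_n * 'I_n}) : {set 'I_n} := [set e.2 | e in F].

Definition removable n h (G : net n h) (F : {set 'I_n * 'I_n}) (v : 'I_n) : bool :=
  (v \in tar F) && [forall u in src F, ~~ follower2 G u v].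

Definition removal_step n h (G : net n h) (F : {set 'I_n * 'I_n}) :
  {set 'I_n * 'I_n} :=
  match [pick v | removable G F v] with
  | Some v => [set e in F | e.2 != v]
  | None => F
  end.

(* Each effective step removes at least one edge, so #|E| steps suffice
   to reach the terminal set. *)
Definition delta n h (G : net n h) (E : {set 'I_n * 'I_n}) : {set 'I_n * 'I_n} :=
  iter #|E| (removal_step G) E.

Definition Delta n h (G : net n h) (E : {set 'I_n * 'I_n}) : nat :=
  if delta G E == set0 then 1%N else 0%N.

(* Main.v *)
Require Import Defs.
From mathcomp Require Import all_boot all_order all_algebra.
From Stdlib Require Import Relations.
Import Order.TTheory GRing.Theory Num.Theory.
Local Open Scope ring_scope.

Section Aux.
Variables (R : realDomainType) (n h : nat) (A : 'I_n -> 'I_h -> R).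

Lemma Ptot_rewire (G G' : net n h) (l : 'I_h) (j k w : 'I_n) :
  l \in G j k -> w != j -> l \notin G j w ->
  (forall x y, G' x y =
       if (x == j) && (y == k) then G j k :\ l
       else if (x == j) && (y == w) then l |: G j w
       else G x y) ->
  Ptot A G' - Ptot A G = (Amax A l - A w l) - (Amax A l - A k l).
Proof.
move=> ljk wj ljw HG'.
have wk : w != k by apply/eqP=> ew; move: ljw; rewrite ew ljk.
rewrite /Ptot /Pl -sumrB (bigD1 j) //=.
rewrite [X in _ + X](_ : _ = 0) ?addr0; last first.
  apply: big1 => x xj; rewrite -sumrB big1 // => l' _; rewrite -sumrB big1 // => y _.
  by rewrite HG' (negbTE xj) /= subrr.
rewrite -sumrB (bigD1 l) //=.
rewrite [X in _ + X](_ : _ = 0) ?addr0; last first.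
  apply: big1 => l' l'l; rewrite -sumrB big1 // => y _.
  rewrite HG' eqxx /=; case: eqP => [->|_]; first by rewrite in_setD1 l'l subrr.
  case: eqP => [->|_]; last by rewrite subrr.
  by rewrite in_setU1 (negbTE l'l) subrr.
rewrite -sumrB (bigD1 k) //= (bigD1 w) //=.
rewrite [X in _ + (_ + X)](_ : _ = 0) ?addr0; last first.
  by apply: big1 => y /andP[yk yw]; rewrite HG' eqxx (negbTE yk) (negbTE yw) /= subrr.
rewrite !HG' !eqxx /= (negbTE wk) /= in_setD1 eqxx in_setU1 eqxx /=.
by rewrite ljk (negbTE ljw) /= !mulr0n !mulr1n add0r subr0 addrC.
Qed.

Lemma local_cond (G : net n h) :
  extremal A G ->
  (forall l j k w, l \in G j k -> w != j -> l \notin G j w -> A w l <= A k l) \/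
  (forall l j k w, l \in G j k -> w != j -> l \notin G j w -> A k l <= A w l).
Proof.
move=> ext.
have key : forall l j k w, l \in G j k -> w != j -> l \notin G j w ->
  exists G', reachable G G' /\
    Ptot A G' - Ptot A G = A k l - A w l.
  move=> l j k w ljk wj ljw.
  pose G' : net n h := fun x y =>
       if (x == j) && (y == k) then G j k :\ l
       else if (x == j) && (y == w) then l |: G j w
       else G x y.
  exists G'; split.
    apply: rt_step; exists l, j, k, w; split=> //.
  rewrite (@Ptot_rewire G G' l j k w) //.
  by rewrite opprB addrC addrA subrK.
case: ext => [mn|mx]; [left|right] => l j k w ljk wj ljw;
  have [G' [rG' dG']] := key l j k w ljk wj ljw.
- by move: (mn _ rG'); rewrite -subr_ge0 dG' subr_ge0.
- by move: (mx _ rG'); rewrite -subr_ge0 -opprB dG' oppr_ge0 subr_le0.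
Qed.

End Aux.

Lemma step_sub n h (G : net n h) (F : {set 'I_n * 'I_n}) : removal_step G F \subset F.
Proof.
rewrite /removal_step; case: pickP => [v _|_] //.
by apply/subsetP=> e; rewrite inE => /andP[].
Qed.

Lemma iter_empty n h (G : net n h) k (F : {set 'I_n * 'I_n}) :
  (forall F' : {set 'I_n * 'I_n}, F' \subset F -> F' != set0 -> removal_step G F' \proper F') ->
  (#|F| <= k)%N -> iter k (removal_step G) F = set0.
Proof.
elim: k F => [|k IH] F Hst Hc.
  by apply/eqP; rewrite -cards_eq0 -leqn0.
rewrite iterSr.
have [->|nz] := eqVneq F set0.
  have -> : removal_step G set0 = set0.
    by apply/eqP; rewrite -subset0 step_sub.
  by elim: k {IH Hc} => //= k ->; apply/eqP; rewrite -subset0 step_sub.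
apply: IH.
  move=> F' sF' nz'; apply: Hst => //; apply: (subset_trans sF'); exact: step_sub.
have := proper_card (Hst F (subxx _) nz).
move=> lt; rewrite -ltnS; exact: leq_trans lt Hc.
Qed.

Theorem theorem1 (R : realDomainType) (n h : nat) (G : net n h)
  (A : 'I_n -> 'I_h -> R) :
  no_self_loops G ->
  (forall i l, 0 <= A i l) ->
  (forall l, injective (fun i => A i l)) ->
  extremal A G ->
  forall E : {set 'I_n * 'I_n},
    E \subset edges G -> E != set0 -> Delta G E = 0%N ->
    ~ (exists l : 'I_h, forall e, e \in E -> l \in G e.1 e.2).
Proof.
move=> _ _ inj ext E _ _ HD [l Hl].
move: HD; rewrite /Delta.
suff -> : delta G E = set0 by rewrite eqxx.
have [B [Binj Bloc]] : exists B : 'I_n -> R, injective B /\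
   forall j k w, l \in G j k -> w != j -> l \notin G j w -> B w <= B k.
  case: (@local_cond R n h A G ext) => [mn|mx].
    by exists (fun i => A i l); split; [exact: inj|exact: mn].
  exists (fun i => - A i l); split.
    by move=> x y /oppr_inj; apply: inj.
  by move=> j k w a b c; rewrite /= lerN2; exact: (mx _ _ _ _ a b c).
apply: iter_empty => // F sFE nzF.
have [e0 e0F] : exists e0, e0 \in F by apply/set0Pn.
have v0T : e0.2 \in tar F by apply/imsetP; exists e0.
pose v := Order.arg_max e0.2 (fun i => i \in tar F) B.
have [vT vmax] : v \in tar F /\ forall x, x \in tar F -> B x <= B v.
  by rewrite /v; case: arg_maxP.
have remv : removable G F v.
  rewrite /removable vT /=; apply/forallP=> u; apply/implyP=> /imsetP[e eF ->].
  have le := vmax _ (imset_f _ eF).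
  rewrite /follower2 /dist_eq2; apply/negP=> /and3P[_ n1 n0].
  have le1 : l \in G e.1 e.2 by apply: Hl; apply: (subsetP sFE).
  have nl : l \notin G e.1 v.
    apply/negP=> lv; move: n1 => /negP; apply; apply/existsP; exists v.
    by rewrite /is_edge /= eqxx andbT; apply/set0Pn; exists l.
  have ve : v != e.1 by rewrite eq_sym.
  have ge := Bloc _ _ _ le1 ve nl.
  have ev : e.2 = v by apply: Binj; apply/eqP; rewrite eq_le le ge.
  by move: nl; rewrite -ev le1.
rewrite properEneq step_sub andbT /removal_step.
case: pickP => [v' rv'|/(_ v)]; last by rewrite remv.
case/andP: rv' => /imsetP[e eF ev'] _.
apply/eqP=> eq.
have : e \in [set e0 in F | e0.2 != v'] by rewrite eq.
by rewrite inE ev' eqxx andbF.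
Qed.
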